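(* Let $H$ be a separable real Hilbert space and $T>0$. On the space of $H$-valued, adapted, càdlàg processes on $[0,T]$, define $$\rho^{\mathrm{em}}_T(X,Y)=\sup_{\Gamma\in\mathcal S^{1,\mathrm{op}}_{\mathrm{prd}}}E\Big[\Big\|\Gamma(0)(X-Y)(0)+\int_{(0,T]}\Gamma(s)\,\mathrm d(X-Y)(s)\Big\|\wedge1\Big].$$ Then $\rho^{\mathrm{em}}_T$ and $d^{\mathrm{em}}_T$ generate the same topology on this space.
   Context: The filtered probability space $(\Omega,\mathcal A,(\mathcal F_t),P)$ is complete. $\mathcal S^{1,\mathrm{op}}_{\mathrm{prd}}=\mathcal S^{1,\mathrm{op}}_{\mathrm{prd}}(H)$ is the set of processes $\Gamma(\omega,t)=\Gamma_0(\omega)1_{\{0\}}(t)+\sum_{i=1}^{n-1}\big(\sum_{k=1}^{N(i)}O_{i,k}1_{A_{i,k}}(\omega)\big)1_{(t_i,t_{i+1}]}(t)$, where $\Gamma_0$ is an $\mathcal F_0$-measurable $L(H)$-valued random variable, $0=t_1<\dots<t_n=T$, $A_{i,k}\in\mathcal F_{t_i}$, $O_{i,k}\in L(H)$, and $\sup_{(\omega,t)}\|\Gamma(\omega,t)\|_{H\to H}\le1$. For an $H$-valued càdlàg process $X$, $\int_{(0,t]}\Gamma\,\mathrm dX:=\sum_{i=1}^{n-1}\big(\sum_kO_{i,k}1_{A_{i,k}}\big)(X(t_{i+1}\wedge t)-X(t_i\wedge t))$, and $d^{\mathrm{em}}_T(X,Y)=\sup_{\Gamma\in\mathcal S^{1,\mathrm{op}}_{\mathrm{prd}}}E\big[\sup_{t\in[0,T]}\|\Gamma(0)(X-Y)(0)+\int_{(0,t]}\Gamma\,\mathrm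 d(X-Y)\|\wedge1\big]$. *)

(* Defs.v *)
From mathcomp Require Import all_boot all_order all_algebra.
From mathcomp Require Import all_classical all_reals all_analysis.
Import Order.TTheory GRing.Theory Num.Theory numFieldNormedType.Exports.

Set Implicit Arguments.
Unset Strict Implicit.
Unset Printing Implicit Defensive.

Local Open Scope classical_set_scope.
Local Open Scope ring_scope.

Section Hilbert.
Context {R : realType} {H : normedModType R}.

Definition is_inner_product (ip : H -> H -> R) : Prop :=
  [/\ (forall x y, ip x y = ip y x),
      (forall (a : R) x y z, ip (a *: x + y) z = a * ip x z + ip y z) &
      (forall x, `|x| ^+ 2 = ip x x)].

Definition separable_space : Prop :=
  exists D : set H, countable D /\ closure D = setT.

Definition is_linear_map (O : H -> H) : Prop :=
  forall (a : R) x y, O (a *: x + y) = a *: O x + O y.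

Definition is_bounded_op (O : H -> H) : Prop :=
  is_linear_map O /\ exists C : R, forall x, `|O x| <= C * `|x|.

Definition op_norm_le1 (O : H -> H) : Prop := forall x, `|O x| <= `|x|.
End Hilbert.

Section Stoch.
Context {R : realType} {H : normedModType R}.
Context {d : measure_display} {Omega : measurableType d}.

Definition meas_wrt (G : set (set Omega)) (f : Omega -> H) : Prop :=
  forall U : set H, open U -> G (f @^-1` U).

Definition is_filtration (F : R -> set (set Omega)) : Prop :=
  [/\ (forall t, sigma_algebra setT (F t)),
      (forall t, F t `<=` measurable) &
      (forall s t, s <= t -> F s `<=` F t)].

Definition complete_fps (P : probability Omega R) (F : R -> set (set Omega)) : Prop :=
  (forall N, P.-negligible N -> measurable N) /\
  (forall N, P.-negligible N -> F 0 N).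

Definition adapted_cadlag (F : R -> set (set Omega)) (T : R)
  (X : Omega -> R -> H) : Prop :=
  (forall t, 0 <= t <= T -> meas_wrt (F t) (fun w => X w t)) /\
  (forall w,
     (forall t, 0 <= t < T -> (X w s @[s --> t^'+]) --> X w t) /\
     (forall t, 0 < t <= T -> cvg (X w s @[s --> t^'-]))).

(** data of an element of S^{1,op}_prd.  Indices are 0-based:
    times t_1 < ... < t_n are [sp_t 0 < ... < sp_t (sp_n - 1)]. *)
Record simple_prd := SimplePrd {
  sp_G0 : Omega -> H -> H;
  sp_n : nat;
  sp_t : nat -> R;
  sp_N : nat -> nat;
  sp_O : nat -> nat -> H -> H;
  sp_A : nat -> nat -> set Omega }.

(** value of Gamma on (t_i, t_{i+1}] at w, applied to h *)
Definition sp_op (G : simple_prd) (i : nat) (w : Omega) (h : H) : H :=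
  \sum_(k < sp_N G i) (\1_(sp_A G i k) w : R) *: sp_O G i k h.

Definition is_simple_prd (F : R -> set (set Omega)) (T : R) (G : simple_prd) : Prop :=
  [/\ (forall w, is_linear_map (sp_G0 G w) /\ op_norm_le1 (sp_G0 G w)),
      (forall h, meas_wrt (F 0) (fun w => sp_G0 G w h)),
      [/\ (0 < sp_n G)%N, sp_t G 0 = 0, sp_t G (sp_n G).-1 = T &
          forall i, (i.+1 < sp_n G)%N -> sp_t G i < sp_t G i.+1],
      (forall i k, (i.+1 < sp_n G)%N -> (k < sp_N G i)%N ->
          is_bounded_op (sp_O G i k) /\ F (sp_t G i) (sp_A G i k)) &
      (forall w i, (i.+1 < sp_n G)%N -> op_norm_le1 (sp_op G i w))].

(** int_{(0,t]} Gamma dZ, pathwise *)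
Definition sp_int (G : simple_prd) (Z : Omega -> R -> H) (w : Omega) (t : R) : H :=
  \sum_(i < (sp_n G).-1)
     sp_op G i w (Z w (Num.min (sp_t G i.+1) t) - Z w (Num.min (sp_t G i) t)).

Definition sp_path (G : simple_prd) (Z : Omega -> R -> H) (w : Omega) (t : R) : H :=
  sp_G0 G w (Z w 0) + sp_int G Z w t.

Definition proc_diff (X Y : Omega -> R -> H) : Omega -> R -> H :=
  fun w s => X w s - Y w s.

Local Open Scope ereal_scope.

Definition d_em (P : probability Omega R) (F : R -> set (set Omega)) (T : R)
  (X Y : Omega -> R -> H) : \bar R :=
  ereal_sup [set (\int[P]_w
      ereal_sup [set (Num.min `|sp_path G (proc_diff X Y) w t| 1)%:E
                 | t in [set t | (0 <= t <= T)%R]])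
    | G in [set G | is_simple_prd F T G]].

Definition rho_em (P : probability Omega R) (F : R -> set (set Omega)) (T : R)
  (X Y : Omega -> R -> H) : \bar R :=
  ereal_sup [set (\int[P]_w (Num.min `|sp_path G (proc_diff X Y) w T| 1)%:E)
    | G in [set G | is_simple_prd F T G]].

Local Close Scope ereal_scope.
End Stoch.

Definition dist_open {R : realType} {E : Type} (S : set E)
  (dist : E -> E -> \bar R) (U : set E) : Prop :=
  forall x, S x -> U x ->
    exists r : R, (0 < r)%R /\
      forall y, S y -> (dist x y < r%:E)%E -> U y.

(* Main.v *)
Require Import Defs.
From mathcomp Require Import all_boot all_order all_algebra.
From mathcomp Require Import all_classical all_reals all_analysis.
From mathcomp Require Import ring lra.
From mathcomp Require Import measurable_realfun.
Import Order.TTheory GRing.Theory Num.Theory numFieldNormedType.Exports.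
Local Open Scope classical_set_scope.
Local Open Scope ring_scope.

Section Dense.
Context {R : realType} {H : normedModType R}.
Lemma dense_seq : @separable_space R H ->
  exists e : nat -> H, forall x (eps : R), 0 < eps -> exists n, `|x - e n| < eps.
Proof.
move=> [D [cD cl]].
have [f finj] := countable_injP _ cD.
have [x0 Dx0] : exists x0, D x0.
  have : closure D (0 : H) by rewrite cl.
  have hb := @nbhsx_ballx R H (0 : H) 1 ltr01.
  by move=> /(_ _ hb) [x [Dx _]]; exists x.
exists (fun n => xget x0 [set a | D a /\ f a = n]) => x eps eps0.
have : closure D x by rewrite cl.
have hb := @nbhsx_ballx R H x eps eps0.
move=> /(_ _ hb) [a [Da]].
rewrite -ball_normE /= => xa.
exists (f a).
have -> : xget x0 [set a0 | D a0 /\ f a0 = f a] = a.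
  apply: xget_unique; first by split.
  move=> y [Dy fy]; apply: finj => //; by rewrite inE.
exact: xa.
Qed.
End Dense.

Section PartA.
Context {R : realType} {H : normedModType R}.
Context {T : pointedType} (G : set (set T)) (hG : sigma_algebra setT G).

Lemma sG_I A B : G A -> G B -> G (A `&` B).
Proof. rewrite -(measurable_g_measurableTypeE hG) => ??; exact: measurableI. Qed.
Lemma sG_C A : G A -> G (~` A).
Proof. rewrite -(measurable_g_measurableTypeE hG) => ?; exact: measurableC. Qed.
Lemma sG_U (A : (set T)^nat) : (forall n, G (A n)) -> G (\bigcup_n A n).
Proof. rewrite -(measurable_g_measurableTypeE hG) => ?; exact: bigcupT_measurable. Qed.
Lemma sG_T : G setT.
Proof. rewrite -(measurable_g_measurableTypeE hG); exact: measurableT. Qed.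
Lemma sG_0 : G set0.
Proof. rewrite -(measurable_g_measurableTypeE hG); exact: measurable0. Qed.

Definition measG (f : T -> H) := forall U : set H, open U -> G (f @^-1` U).

Lemma open_ball_sub {U : set H} {x : H} : open U -> U x -> exists2 e : R, 0 < e & forall y, `|x - y| < e -> U y.
Proof.
move=> oU Ux.
have : nbhs x U by apply: open_nbhs_nbhs; split.
move=> /nbhs_ballP [e e0 be]; exists e => // y xy; apply: be.
by rewrite -ball_normE.
Qed.

Lemma meas_lip (e : nat -> H) (K : T -> H -> H) (g : T -> H) :
  (forall x (eps : R), 0 < eps -> exists n, `|x - e n| < eps) ->
  (forall w h h', `|K w h - K w h'| <= `|h - h'|) ->
  (forall n, measG (fun w => K w (e n))) ->
  measG g -> measG (fun w => K w (g w)).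
Proof.
move=> de Klip Km gm U oU.
pose r (n : nat) : R := n.+1%:R^-1.
have r0 n : 0 < r n by rewrite /r invr_gt0.
pose V n : set H := \bigcup_(u in [set u | forall y, `|u - y| < 3 * r n -> U y]) ball u (r n).
have oV n : open (V n) by apply: bigcup_open => u _; exact: ball_open.
have -> : (fun w => K w (g w)) @^-1` U =
  \bigcup_n \bigcup_k (g @^-1` ball (e k) (r n) `&` (fun w => K w (e k)) @^-1` V n).
  apply/seteqP; split => w /=.
  - move=> /(open_ball_sub oU) [eps eps0 hb].
    have [n hn] : exists n, 3 * r n < eps.
      have e30 : 0 <= 3 / eps by rewrite divr_ge0 // ltW.
      exists (Num.trunc (3 / eps)).
      have /andP[_ h] := truncn_itv e30.
      rewrite ltr_pdivrMr // in h.
      rewrite /r -/(_ / _) ltr_pdivrMr //; by rewrite mulrC.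
    have [k hk] := de (g w) (r n) (r0 n).
    exists n => //; exists k => //; split => /=.
      by rewrite -ball_normE /= distrC.
    exists (K w (g w)) => /=.
      move=> y hy; apply: hb; exact: lt_trans hy hn.
    rewrite -ball_normE /=.
    rewrite distrC; apply: le_lt_trans (Klip _ _ _) _; by rewrite distrC.
  - move=> [n _ [k _ [/= hg [u /= hu]]]].
    rewrite -ball_normE /= => hK.
    rewrite -ball_normE /= in hg.
    apply: hu.
    have -> : u - K w (g w) = (u - K w (e k)) + (K w (e k) - K w (g w)) by rewrite addrA subrK.
    apply: le_lt_trans (ler_normD _ _) _.
    have h2 : `|K w (e k) - K w (g w)| < r n by apply: le_lt_trans (Klip _ _ _) _.
    apply: lt_le_trans (ltrD hK h2) _.
    have := r0 n; lra.
apply: sG_U => n; apply: sG_U => k; apply: sG_I.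
  by apply: gm; exact: ball_open.
exact: Km.
Qed.
End PartA.

Section PartB.
Context {R : realType} {H : normedModType R} {T : pointedType} (G : set (set T)) (hG : sigma_algebra setT G).
Implicit Types (f g v : T -> H).
Context (e : nat -> H) (de : forall x (eps : R), 0 < eps -> exists n, `|x - e n| < eps).

Lemma open_of_balls (A : set H) :
  (forall x, A x -> exists2 eps : R, 0 < eps & forall y, `|x - y| < eps -> A y) -> open A.
Proof.
move=> hA; rewrite openE => x Ax; apply/nbhs_ballP.
have [eps e0 h] := hA x Ax; exists eps => // y; rewrite -ball_normE; exact: h.
Qed.

Lemma measG_lip (phi : H -> H) (C : R) f :
  (forall x y, `|phi x - phi y| <= C * `|x - y|) -> measG G f -> measG G (phi \o f).
Proof.
move=> hphi fm U oU.
have -> : (phi \o f) @^-1` U = f @^-1` (phi @^-1` U) by [].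
apply: fm; apply: open_of_balls => x Ux.
have [eps e0 h] := open_ball_sub oU Ux.
have c0 : 0 < `|C| + 1 by have := normr_ge0 C; lra.
exists (eps / (`|C| + 1)); first by rewrite divr_gt0.
move=> y xy; apply: h; apply: le_lt_trans (hphi x y) _.
rewrite ltr_pdivlMr // in xy.
have a0 := normr_ge0 (x - y).
have hC : C * `|x - y| <= `|C| * `|x - y| by rewrite ler_wpM2r // ler_norm.
have := normr_ge0 C; nra.
Qed.

Lemma measG_cst (c : H) : measG G (fun _ : T => c).
Proof.
move=> U _; have [Uc|Uc] := pselect (U c).
  by rewrite (_ : _ @^-1` U = setT); [exact: sG_T | apply/seteqP; split].
by rewrite (_ : _ @^-1` U = set0); [exact: sG_0 | apply/seteqP; split].
Qed.

Lemma measG_add f g : measG G f -> measG G g -> measG G (fun w => f w + g w).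
Proof.
move=> fm gm.
apply: (@meas_lip _ _ _ G hG e (fun w h => f w + h) g de) => //.
- by move=> w h h'; rewrite opprD addrACA subrr add0r.
- move=> n; apply: (@measG_lip (fun x => x + e n) 1 f) => // x y.
  by rewrite mul1r opprD addrACA subrr addr0.
Qed.

Lemma measG_opp f : measG G f -> measG G (fun w => - f w).
Proof.
move=> fm; apply: (@measG_lip (fun x => - x) 1 f) => // x y.
by rewrite mul1r -opprD normrN.
Qed.

Lemma measG_sub f g : measG G f -> measG G g -> measG G (fun w => f w - g w).
Proof. by move=> fm gm; apply: measG_add => //; exact: measG_opp. Qed.

Lemma sG_U2 A B : G A -> G B -> G (A `|` B).
Proof.
move=> hA hB; rewrite -[A `|` B]setCK setCU; apply: sG_C => //.
by apply: sG_I => //; exact: sG_C.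
Qed.

Lemma measG_indic A v : G A -> measG G v -> measG G (fun w => (\1_A w : R) *: v w).
Proof.
move=> hA vm U oU.
have -> : (fun w => (\1_A w : R) *: v w) @^-1` U =
   (A `&` v @^-1` U) `|` (~` A `&` (fun _ => (0 : H)) @^-1` U).
  apply/seteqP; split => w /=.
    rewrite indicE; have [Aw|Aw] := pselect (A w).
      by rewrite mem_set // scale1r => Uv; left.
    by rewrite memNset // scale0r => U0; right.
  rewrite indicE; case=> [[Aw Uv]|[Aw U0]].
    by rewrite mem_set // scale1r.
  by rewrite memNset // scale0r.
apply: sG_U2; apply: sG_I => //; [exact: vm | exact: sG_C | exact: measG_cst].
Qed.

Lemma measG_sum N (f : nat -> T -> H) : (forall k, (k < N)%N -> measG G (f k)) ->
  measG G (fun w => \sum_(k < N) f k w).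
Proof.
elim: N => [|N IH] hf.
  under eq_fun do rewrite big_ord0; exact: measG_cst.
under eq_fun do rewrite big_ord_recr /=.
apply: measG_add; first by apply: IH => k kN; apply: hf; exact: ltnW.
exact: hf.
Qed.

End PartB.

Lemma measG_mono {R : realType} {H : normedModType R} {T : pointedType} {G G' : set (set T)} {f : T -> H} :
  G `<=` G' -> measG G f -> measG G' f.
Proof. by move=> GG fm U oU; apply: GG; exact: fm. Qed.

Section PartC.
Context {R : realType} {H : normedModType R} {d : measure_display} {Omega : measurableType d}.
Context {F : R -> set (set Omega)} (hF : is_filtration F) {T : R}.
Context {Gm : @simple_prd R H d Omega} (hGm : is_simple_prd F T Gm).

Context {e : nat -> H} (de : forall x (eps : R), 0 < eps -> exists n, `|x - e n| < eps).

Implicit Types X Y : Omega -> R -> H.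
Local Notation t := (sp_t Gm).
Local Notation n := (sp_n Gm).

Lemma lin_sub {O : H -> H} : is_linear_map O -> forall h h', O (h - h') = O h - O h'.
Proof.
move=> hO h h'; have := hO (-1) h' h.
by rewrite !scaleN1r => E; rewrite [h - h']addrC E addrC.
Qed.

Lemma lin_0 {O : H -> H} : is_linear_map O -> O 0 = 0.
Proof. by move=> hO; have := lin_sub hO 0 0; rewrite !subrr. Qed.

Lemma t_le i j : (i <= j)%N -> (j < n)%N -> t i <= t j.
Proof.
case: hGm => _ _ [_ _ _ hinc] _ _.
elim: j => [|j IH]; first by rewrite leqn0 => /eqP ->.
rewrite leq_eqVlt => /orP [/eqP -> //|ij] jn.
apply: le_trans (IH ij (ltnW jn)) _; exact/ltW/hinc.
Qed.

Lemma t_ge0 i : (i < n)%N -> 0 <= t i.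
Proof.
case: hGm => _ _ [_ t0 _ _] _ _ => hi.
by rewrite -t0; apply: t_le.
Qed.

Lemma t_leT i : (i < n)%N -> t i <= T.
Proof.
case: hGm => _ _ [n0 _ tT _] _ _ => hi.
by rewrite -tT; apply: t_le => //; [rewrite -ltnS prednK | rewrite prednK].
Qed.

Lemma sp_op_sub i w h h' : (i.+1 < n)%N ->
  sp_op Gm i w (h - h') = sp_op Gm i w h - sp_op Gm i w h'.
Proof.
case: hGm => _ _ _ hO _ => hi.
rewrite /sp_op -sumrB; apply: eq_bigr => k _.
have [[lin _] _] := hO i k hi (ltn_ord k).
by rewrite lin_sub // scalerBr.
Qed.

Lemma sp_op_0 i w : (i.+1 < n)%N -> sp_op Gm i w 0 = 0.
Proof. by move=> hi; have := sp_op_sub i w 0 0 hi; rewrite !subrr. Qed.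

Lemma sp_op_lip i w h h' : (i.+1 < n)%N ->
  `|sp_op Gm i w h - sp_op Gm i w h'| <= `|h - h'|.
Proof.
move=> hi; rewrite -sp_op_sub //.
case: hGm => _ _ _ _ hn; exact: hn.
Qed.

Lemma G0_lip w h h' : `|sp_G0 Gm w h - sp_G0 Gm w h'| <= `|h - h'|.
Proof.
case: hGm => hG0 _ _ _ _; have [lin nrm] := hG0 w.
by rewrite -lin_sub.
Qed.

Lemma filt_mono {s u} : s <= u -> F s `<=` F u.
Proof. by case: hF => _ _; apply. Qed.

Lemma filt_sigma s : sigma_algebra setT (F s).
Proof. by case: hF. Qed.

Lemma sp_op_meas i h : (i.+1 < n)%N -> measG (F (t i)) (fun w => sp_op Gm i w h).
Proof.
move=> hi; rewrite /sp_op.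
apply: (@measG_sum _ _ _ _ (filt_sigma _) e de _ (fun k w => (\1_(sp_A Gm i k) w : R) *: sp_O Gm i k h)) => k kN.
case: hGm => _ _ _ hO _.
have [_ hA] := hO i k hi kN.
apply: (@measG_indic _ _ _ _ (filt_sigma _) _ (fun _ => sp_O Gm i k h)) => //.
have := @measG_cst _ _ _ (F (t i)) (filt_sigma _) (sp_O Gm i k h).
by [].
Qed.


Lemma Z_meas X Y u : adapted_cadlag F T X -> adapted_cadlag F T Y -> 0 <= u <= T ->
  measG (F u) (fun w => proc_diff X Y w u).
Proof.
move=> [hX _] [hY _] hu; rewrite /proc_diff.
apply: (@measG_sub _ _ _ _ (filt_sigma u) e de (fun w => X w u) (fun w => Y w u)).
  exact: hX.
exact: hY.
Qed.

Lemma path_meas X Y s : adapted_cadlag F T X -> adapted_cadlag F T Y -> 0 <= s <= T ->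
  measG (F s) (fun w => sp_path Gm (proc_diff X Y) w s).
Proof.
move=> hX hY /andP[s0 sT]; rewrite /sp_path.
have n0 : (0 < n)%N by case: hGm => _ _ [].
apply: (@measG_add _ _ _ _ (filt_sigma s) e de).
  apply: (@meas_lip _ _ _ _ (filt_sigma s) e (sp_G0 Gm) (fun w => proc_diff X Y w 0) de).
  - exact: G0_lip.
  - move=> m; apply: (measG_mono (filt_mono s0)).
    by case: hGm => _ hG0 _ _ _; exact: hG0.
  - apply: (measG_mono (filt_mono s0)); apply: Z_meas => //.
    by rewrite lexx /=; apply: le_trans sT.
rewrite /sp_int.
apply: (@measG_sum _ _ _ _ (filt_sigma s) e de _ (fun i w => sp_op Gm i w (proc_diff X Y w (Num.min (t i.+1) s) - proc_diff X Y w (Num.min (t i) s)))) => i.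
rewrite ltn_predRL => hi /=.
have [tis|sti] := leP (t i) s.
  apply: (@meas_lip _ _ _ _ (filt_sigma s) e (sp_op Gm i) (fun w => proc_diff X Y w (Num.min (t i.+1) s) - proc_diff X Y w (t i)) de).
  - by move=> w h h'; exact: sp_op_lip.
  - by move=> m; apply: (measG_mono (filt_mono tis)); exact: sp_op_meas.
  - apply: (@measG_sub _ _ _ _ (filt_sigma s) e de).
    + apply: (measG_mono (filt_mono _)); last apply: Z_meas => //.
        by rewrite ge_min lexx orbT.
      by rewrite le_min s0 t_ge0 //= ge_min sT orbT.
    + apply: (measG_mono (filt_mono tis)); apply: Z_meas => //.
      by rewrite t_ge0 ?t_leT //; exact: ltnW.
have -> : Num.min (t i.+1) s = s.
  apply: min_r; apply: le_trans (ltW sti) _; apply: t_le => //.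
have -> : (fun w => sp_op Gm i w (proc_diff X Y w s - proc_diff X Y w s)) = fun=> 0.
  by apply: funext => w; rewrite subrr sp_op_0.
by have := @measG_cst _ _ _ (F s) (filt_sigma _) 0.
Qed.

Lemma path_small_meas X Y s (dl : R) : adapted_cadlag F T X -> adapted_cadlag F T Y -> 0 <= s <= T ->
  F s [set w | `|sp_path Gm (proc_diff X Y) w s| <= dl].
Proof.
move=> hX hY hs.
have -> : [set w | `|sp_path Gm (proc_diff X Y) w s| <= dl] =
   ~` ((fun w => sp_path Gm (proc_diff X Y) w s) @^-1` [set v : H | dl < `|v|]).
  apply/seteqP; split => w /=; rewrite leNgt; [by move=> /negP | by move=> h; apply/negP].
apply: sG_C; first exact: filt_sigma.
apply: path_meas => //.
apply: open_of_balls => v /= hv; exists (`|v| - dl); first by rewrite subr_gt0.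
move=> y hy; have := ler_normD (v - y) y; rewrite subrK.
have := normr_ge0 (v - y); lra.
Qed.

End PartC.

Section PartD.
Context {R : realType} {H : normedModType R} {d : measure_display} {Omega : measurableType d}.
Context (F : R -> set (set Omega)) (hF : is_filtration F) (T : R).
Context (Gm : @simple_prd R H d Omega) (hGm : is_simple_prd F T Gm).
Implicit Types X Y Z : Omega -> R -> H.
Local Notation t := (sp_t Gm).
Local Notation n := (sp_n Gm).

Lemma path_diff Z w i u v : (i.+1 < n)%N -> t i <= u -> u <= v -> v <= t i.+1 ->
  sp_path Gm Z w v - sp_path Gm Z w u = sp_op Gm i w (Z w v - Z w u).
Proof.
move=> hi tu uv vt.
rewrite /sp_path opprD addrACA subrr add0r /sp_int -sumrB.
have hi' : (i < n.-1)%N by rewrite ltn_predRL.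
rewrite (bigD1 (Ordinal hi')) //= big1 ?addr0.
  rewrite (min_r vt) (min_l (le_trans tu uv)) (min_r (le_trans uv vt)) (min_l tu).
  by rewrite -(sp_op_sub hGm) // opprB addrA subrK.
move=> j /eqP neq.
have jn : ((j : nat).+1 < n)%N by rewrite -ltn_predRL.
have [ji|ij] := ltnP j i.
  have h1 : t j.+1 <= u by apply: le_trans tu; apply: (t_le hGm) => //; exact: ltnW.
  have h0 : t j <= t j.+1 by apply: (t_le hGm) => //; exact: ltnW.
  rewrite (min_l (le_trans h1 uv)) (min_l (le_trans (le_trans h0 h1) uv)) (min_l h1).
  by rewrite (min_l (le_trans h0 h1)) subrr.
have ij' : (i < j)%N.
  rewrite ltn_neqAle ij andbT; apply/eqP => E; apply: neq; apply: val_inj => /=; by rewrite E.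
have h1 : v <= t j by apply: le_trans vt _; apply: (t_le hGm) => //; exact: ltnW.
have h0 : t j <= t j.+1 by apply: (t_le hGm) => //; exact: ltnW.
rewrite (min_r (le_trans h1 h0)) (min_r h1) (min_r (le_trans uv (le_trans h1 h0))) (min_r (le_trans uv h1)).
by rewrite !subrr.
Qed.

Lemma path_at0 Z w : sp_path Gm Z w 0 = sp_G0 Gm w (Z w 0).
Proof.
rewrite /sp_path /sp_int big1 ?addr0 // => i _.
have hi : ((i : nat).+1 < n)%N by rewrite -ltn_predRL.
rewrite (min_r (t_ge0 hGm _ hi)) (min_r (t_ge0 hGm _ (ltnW hi))).
by rewrite subrr (sp_op_0 hGm).
Qed.

Definition sg (M j : nat) : R :=
  t (j %/ M) + (j %% M)%:R * (t (j %/ M).+1 - t (j %/ M)) / M%:R.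

Lemma hpos {i} : (i.+1 < n)%N -> 0 < t i.+1 - t i.
Proof. by case: hGm => _ _ [_ _ _ hinc] _ _ hi; rewrite subr_gt0 hinc. Qed.

Lemma sg_formula M q r : (0 < M)%N -> (r <= M)%N ->
  sg M (q * M + r) = t q + r%:R * (t q.+1 - t q) / M%:R.
Proof.
move=> M0; rewrite leq_eqVlt => /orP [/eqP ->|rM].
  rewrite /sg -mulSnr mulnK // modnMl !mul0r addr0.
  rewrite mulrAC mulfV ?mul1r; last by rewrite pnatr_eq0 -lt0n.
  by rewrite addrC subrK.
by rewrite /sg divnMDl // divn_small // addn0 modnMDl modn_small.
Qed.

Lemma decomp_S M j : (0 < M)%N -> j.+1 = (j %/ M * M + (j %% M).+1)%N.
Proof. by move=> M0; rewrite addnS -divn_eq. Qed.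

Lemma sg_S M j : (0 < M)%N -> sg M j.+1 = sg M j + (t (j %/ M).+1 - t (j %/ M)) / M%:R.
Proof.
move=> M0; rewrite (@decomp_S M j M0) sg_formula ?ltn_pmod //.
rewrite /sg -addrA.
rewrite -[((j %% M).+1)%N]addn1.
rewrite natrD; ring.
Qed.

Lemma idx_lt {M j} : (0 < M)%N -> (j < n.-1 * M)%N -> ((j %/ M).+1 < n)%N.
Proof. by move=> M0 hj; rewrite -ltn_predRL ltn_divLR. Qed.

Lemma sg_lo M j : (0 < M)%N -> (j < n.-1 * M)%N -> t (j %/ M) <= sg M j.
Proof.
move=> M0 hj; rewrite /sg lerDl.
have := hpos (idx_lt M0 hj); set h := t _ - t _ => h0.
by rewrite divr_ge0 // mulr_ge0 // ltW.
Qed.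

Lemma sg_hi M j : (0 < M)%N -> (j < n.-1 * M)%N -> sg M j.+1 <= t (j %/ M).+1.
Proof.
move=> M0 hj; rewrite (@decomp_S M j M0) sg_formula ?ltn_pmod //.
have := hpos (idx_lt M0 hj); set h := t _ - t _ => h0.
have M0' : 0 < M%:R :> R by rewrite ltr0n.
rewrite -lerBrDl ler_pdivrMr // mulrC ler_pM2l //.
by rewrite ler_nat ltn_pmod.
Qed.

Lemma sg_lt M j : (0 < M)%N -> (j < n.-1 * M)%N -> sg M j < sg M j.+1.
Proof.
move=> M0 hj; rewrite sg_S // ltrDl divr_gt0 ?ltr0n //.
exact: hpos (idx_lt M0 hj).
Qed.

Lemma sg_mono M j l : (0 < M)%N -> (j <= l)%N -> (l <= n.-1 * M)%N -> sg M j <= sg M l.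
Proof.
move=> M0; elim: l => [|l IH]; first by rewrite leqn0 => /eqP ->.
rewrite leq_eqVlt => /orP [/eqP -> //|jl] hl.
apply: le_trans (IH jl (ltnW hl)) _; exact/ltW/sg_lt.
Qed.

Lemma sg_0 M : sg M 0 = 0.
Proof. by case: hGm => _ _ [_ t0 _ _] _ _; rewrite /sg div0n mod0n !mul0r addr0. Qed.

Lemma sg_end M : (0 < M)%N -> sg M (n.-1 * M) = T.
Proof.
case: hGm => _ _ [_ _ tT _] _ _ M0.
by rewrite /sg mulnK // modnMl !mul0r addr0.
Qed.

Lemma sg_in M j : (0 < M)%N -> (j <= n.-1 * M)%N -> 0 <= sg M j <= T.
Proof.
move=> M0 hj; apply/andP; split.
  by rewrite -(sg_0 M); apply: sg_mono.
by rewrite -(sg_end _ M0); apply: sg_mono.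
Qed.

Lemma path_step Z w M j : (0 < M)%N -> (j < n.-1 * M)%N ->
  sp_path Gm Z w (sg M j.+1) - sp_path Gm Z w (sg M j) =
  sp_op Gm (j %/ M) w (Z w (sg M j.+1) - Z w (sg M j)).
Proof.
move=> M0 hj; apply: path_diff.
- exact: idx_lt.
- exact: sg_lo.
- exact/ltW/sg_lt.
- exact: sg_hi.
Qed.

Lemma path_tele Z w M l : (0 < M)%N -> (l <= n.-1 * M)%N ->
  sp_path Gm Z w (sg M l) = sp_G0 Gm w (Z w 0) +
    \sum_(j < l) sp_op Gm (j %/ M) w (Z w (sg M j.+1) - Z w (sg M j)).
Proof.
move=> M0; elim: l => [|l IH] hl.
  by rewrite big_ord0 addr0 sg_0 path_at0.
rewrite big_ord_recr /= addrA -IH ?(ltnW hl) // -path_step //.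
by rewrite addrC subrK.
Qed.

End PartD.

Arguments path_diff {R H} {d} {Omega} {F T Gm} hGm Z w i u v _ _ _ _.
Arguments path_at0 {R H} {d} {Omega} {F T Gm} hGm Z w.
Arguments hpos {R H} {d} {Omega} {F T Gm} hGm {i} _.
Arguments sg_formula {R H} {d} {Omega} Gm (M q r) _ _.
Arguments sg_S {R H} {d} {Omega} Gm (M j) _.
Arguments idx_lt {R H} {d} {Omega} Gm {M j} _ _.
Arguments sg_lo {R H} {d} {Omega} {F T Gm} hGm (M j) _ _.
Arguments sg_hi {R H} {d} {Omega} {F T Gm} hGm (M j) _ _.
Arguments sg_lt {R H} {d} {Omega} {F T Gm} hGm (M j) _ _.
Arguments sg_mono {R H} {d} {Omega} {F T Gm} hGm (M j l) _ _ _.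
Arguments sg_0 {R H} {d} {Omega} {F T Gm} hGm M.
Arguments sg_end {R H} {d} {Omega} {F T Gm} hGm M _.
Arguments sg_in {R H} {d} {Omega} {F T Gm} hGm (M j) _ _.
Arguments path_step {R H} {d} {Omega} {F T Gm} hGm Z w (M j) _ _.
Arguments path_tele {R H} {d} {Omega} {F T Gm} hGm Z w (M l) _ _.

Section PartE.
Context {R : realType} {H : normedModType R} {d : measure_display} {Omega : measurableType d}.
Context (Gm : @simple_prd R H d Omega).
Local Notation t := (sp_t Gm).
Local Notation n := (sp_n Gm).

Definition Cset (M : nat) (dl : R) (Z : Omega -> R -> H) (j : nat) : set Omega :=
  [set w | forall l, (l <= j)%N -> `|sp_path Gm Z w (sg Gm M l)| <= dl].

Definition stopped (M : nat) (dl : R) (Z : Omega -> R -> H) : @simple_prd R H d Omega :=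
  @SimplePrd R H d Omega (sp_G0 Gm) (n.-1 * M).+1 (sg Gm M) (fun j => sp_N Gm (j %/ M))
    (fun j k => sp_O Gm (j %/ M) k) (fun j k => sp_A Gm (j %/ M) k `&` Cset M dl Z j).

Lemma sp_op_stopped M dl Z j w h :
  sp_op (stopped M dl Z) j w h = (\1_(Cset M dl Z j) w : R) *: sp_op Gm (j %/ M) w h.
Proof.
rewrite /sp_op /= scaler_sumr; apply: eq_bigr => k _.
by rewrite indicI /= scalerA mulrC.
Qed.

End PartE.

Section PartE2.
Context {R : realType} {H : normedModType R} {d : measure_display} {Omega : measurableType d}.
Context {F : R -> set (set Omega)} (hF : is_filtration F) {T : R}.
Context {Gm : @simple_prd R H d Omega} (hGm : is_simple_prd F T Gm).
Local Notation t := (sp_t Gm).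
Local Notation n := (sp_n Gm).

Lemma stopped_path M dl Z w : (0 < M)%N ->
  sp_path (stopped Gm M dl Z) Z w T = sp_G0 Gm w (Z w 0) +
   \sum_(j < n.-1 * M) (\1_(Cset Gm M dl Z j) w : R) *:
      sp_op Gm (j %/ M) w (Z w (sg Gm M j.+1) - Z w (sg Gm M j)).
Proof.
move=> M0; rewrite /sp_path /sp_int /=; congr (_ + _).
apply: eq_bigr => j _; rewrite sp_op_stopped.
have /andP[_ h1] := sg_in hGm M j.+1 M0 (ltn_ord j).
have /andP[_ h2] := sg_in hGm M j M0 (ltnW (ltn_ord j)).
by rewrite (min_l h1) (min_l h2).
Qed.

Lemma stopped_hit M dl Z w : (0 < M)%N ->
  (exists j, (j <= n.-1 * M)%N /\ dl < `|sp_path Gm Z w (sg Gm M j)|) ->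
  dl < `|sp_path (stopped Gm M dl Z) Z w T|.
Proof.
move=> M0 [j0 [hj0 hdl0]].
pose P := fun j => ((j <= n.-1 * M)%N && (dl < `|sp_path Gm Z w (sg Gm M j)|)).
have exP : exists j, P j by exists j0; rewrite /P hj0 hdl0.
case: (ex_minnP exP) => js /andP[hjs hdl] minj.
rewrite stopped_path //.
pose f := fun j : nat => (\1_(Cset Gm M dl Z j) w : R) *:
      sp_op Gm (j %/ M) w (Z w (sg Gm M j.+1) - Z w (sg Gm M j)).
have -> : \sum_(j < n.-1 * M) (\1_(Cset Gm M dl Z j) w : R) *:
      sp_op Gm (j %/ M) w (Z w (sg Gm M j.+1) - Z w (sg Gm M j)) = \sum_(0 <= j < n.-1 * M) f j.
  by rewrite big_mkord.
rewrite (@big_cat_nat _ _ _ js 0 (n.-1 * M) _ f (leq0n js) hjs) /=.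
rewrite [X in _ + (_ + X)]big_nat_cond [X in _ + (_ + X)]big1 ?addr0; last first.
  move=> j /andP[/andP[jsj _] _]; rewrite /f indicE memNset ?scale0r //.
  by move=> /(_ js jsj); rewrite leNgt hdl.
rewrite -/(f _) big_mkord.
have -> : \sum_(i < js) (\1_(Cset Gm M dl Z i) w : R) *: sp_op Gm (i %/ M) w (Z w (sg Gm M i.+1) - Z w (sg Gm M i))
   = \sum_(i < js) sp_op Gm (i %/ M) w (Z w (sg Gm M i.+1) - Z w (sg Gm M i)).
  apply: eq_bigr => i _; rewrite indicE mem_set ?scale1r //.
  move=> l li; rewrite leNgt; apply/negP => hl.
  have : (js <= l)%N.
    apply: minj; rewrite /P hl andbT.
    apply: leq_trans hjs; exact: leq_trans li (ltnW (ltn_ord i)).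
  by rewrite leqNgt (leq_ltn_trans li (ltn_ord i)).
by rewrite -(path_tele hGm).
Qed.

Context {e : nat -> H} (de : forall x (eps : R), 0 < eps -> exists n, `|x - e n| < eps).
Context (X Y : Omega -> R -> H) (hX : adapted_cadlag F T X) (hY : adapted_cadlag F T Y).

Lemma Cset_meas M dl j : (0 < M)%N -> (j <= n.-1 * M)%N ->
  F (sg Gm M j) (Cset Gm M dl (proc_diff X Y) j).
Proof.
move=> M0; elim: j => [|j IH] hj.
  have -> : Cset Gm M dl (proc_diff X Y) 0 =
      [set w | `|sp_path Gm (proc_diff X Y) w (sg Gm M 0)| <= dl].
    apply/seteqP; split => w /=; first by move=> h; exact: h 0%N (leqnn 0).
    by move=> h l; rewrite leqn0 => /eqP ->.
  exact: (path_small_meas hF hGm de X Y _ dl hX hY (sg_in hGm M 0 M0 hj)).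
have -> : Cset Gm M dl (proc_diff X Y) j.+1 = Cset Gm M dl (proc_diff X Y) j `&`
      [set w | `|sp_path Gm (proc_diff X Y) w (sg Gm M j.+1)| <= dl].
  apply/seteqP; split => w /=.
    by move=> h; split; [move=> l lj; apply: h; exact: leqW | exact: h].
  move=> [h1 h2] l; rewrite leq_eqVlt => /orP [/eqP -> //|]; rewrite ltnS; exact: h1.
apply: sG_I; first exact: filt_sigma hF _.
  apply: (filt_mono hF (sg_mono hGm M j j.+1 M0 (leqnSn j) hj)); exact: IH (ltnW hj).
exact: (path_small_meas hF hGm de X Y _ dl hX hY (sg_in hGm M _ M0 hj)).
Qed.

Lemma stopped_simple M dl : (0 < M)%N -> is_simple_prd F T (stopped Gm M dl (proc_diff X Y)).
Proof.
move=> M0; have := hGm; case => hG0 hG0m [n0 t0 tT hinc] hO hn.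
split => //=.
- split => //; first exact: (sg_0 hGm).
    exact: (sg_end hGm).
  move=> j; rewrite ltnS => hj; exact: (sg_lt hGm).
- move=> j k; rewrite ltnS => hj hk.
  have hi := idx_lt Gm M0 hj.
  have [hb hA] := hO _ k hi hk.
  split => //; apply: sG_I; first exact: filt_sigma hF _.
    exact: (filt_mono hF (sg_lo hGm M j M0 hj)).
  exact: Cset_meas (ltnW hj).
- move=> w j; rewrite ltnS => hj x.
  rewrite sp_op_stopped indicE.
  case: (w \in _); rewrite ?scale1r ?scale0r ?normr0 ?normr_ge0 //.
  exact: (hn w _ (idx_lt Gm M0 hj)).
Qed.

End PartE2.

Lemma rc_eps {R : realType} {H : normedModType R} (f : R -> H) (t : R) (eta : R) :
  0 < eta -> (f s @[s --> t^'+]) --> f t ->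
  exists2 eps : R, 0 < eps & forall u, t < u < t + eps -> `|f u - f t| < eta.
Proof.
move=> eta0 hf.
have := cvgr_dist_lt _ _ hf _ eta0.
move=> h.
have h2 : nbhs t (fun u : R => t < u -> `|f t - f u| < eta) by exact: h.
move: h2 => /nbhs_ballP [eps eps0 heps]; exists eps => // u /andP[tu ue].
rewrite distrC; apply: heps => //.
rewrite -ball_normE /= ltr_norml; apply/andP; split; lra.
Qed.

Section PartF.
Context {R : realType} {H : normedModType R} {d : measure_display} {Omega : measurableType d}.
Context {F : R -> set (set Omega)} {T : R}.
Context {Gm : @simple_prd R H d Omega} (hGm : is_simple_prd F T Gm).
Local Notation t := (sp_t Gm).
Local Notation n := (sp_n Gm).

Lemma find_interval s : 0 <= s < T -> exists i, [/\ (i.+1 < n)%N, t i <= s & s < t i.+1].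
Proof.
move=> /andP[s0 sT].
have := hGm; case => _ _ [n0 t0 tT hinc] _ _.
pose P := fun i => ((i < n.-1)%N && (t i <= s)).
have n1 : (0 < n.-1)%N.
  rewrite lt0n; apply/negP => /eqP E.
  by move: tT; rewrite E t0 => T0; move: sT; rewrite -T0 => /(le_lt_trans s0); rewrite ltxx.
have exP : exists i, P i by exists 0%N; rewrite /P n1 t0.
have ubP : forall i, P i -> (i <= n)%N by move=> i /andP[hi _]; apply: ltnW; apply: leq_trans hi (leq_pred n).
case: (ex_maxnP exP ubP) => i /andP[hi tis] maxi.
exists i; split => //; first by rewrite -ltn_predRL.
have [ilt|ieq] := ltnP i.+1 n.-1.
  rewrite ltNge; apply/negP => h.
  by have := maxi i.+1; rewrite /P ilt h => /(_ isT); rewrite ltnn.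
have -> : i.+1 = n.-1 by apply/eqP; rewrite eqn_leq ieq hi.
by rewrite tT.
Qed.

Context (X Y : Omega -> R -> H) (hX : adapted_cadlag F T X) (hY : adapted_cadlag F T Y).
Local Notation Z := (proc_diff X Y).

Lemma hit_eventually w s dl : 0 <= s <= T -> dl < `|sp_path Gm Z w s| ->
  exists m, forall k, (m <= k)%N -> exists j,
    (j <= n.-1 * k.+1)%N /\ dl < `|sp_path Gm Z w (sg Gm k.+1 j)|.
Proof.
move=> /andP[s0 sT] hdl.
have [sT'|sT'] := eqVneq s T.
  exists 0%N => k _; exists (n.-1 * k.+1)%N; split => //.
  by rewrite (sg_end hGm) // -sT'.
have sT2 : s < T by rewrite lt_neqAle sT' sT.
have [i [hi tis sti]] := find_interval s (introT andP (conj s0 sT2)).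
pose eta := `|sp_path Gm Z w s| - dl.
have eta0 : 0 < eta / 2 by rewrite divr_gt0 // subr_gt0.
have [ex ex0 hex] := rc_eps (X w) s (eta / 2) eta0 ((hX.2 w).1 s (introT andP (conj s0 sT2))).
have [ey ey0 hey] := rc_eps (Y w) s (eta / 2) eta0 ((hY.2 w).1 s (introT andP (conj s0 sT2))).
pose eps := Num.min ex ey.
have eps0 : 0 < eps by rewrite lt_min ex0 ey0.
pose h := t i.+1 - t i.
have h0 : 0 < h := hpos hGm hi.
exists (Num.trunc (h / eps)) => k hk.
pose Mr : R := k.+1%:R.
have Mr0 : 0 < Mr by rewrite ltr0n.
have hMr : h < eps * Mr.
  have /andP[_ h1] := truncn_itv (divr_ge0 (ltW h0) (ltW eps0)).
  have h2 : (Num.trunc (h / eps)).+1%:R <= Mr by rewrite ler_nat ltnS.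
  have h3 : h / eps < Mr := lt_le_trans h1 h2.
  by rewrite ltr_pdivrMr // mulrC in h3.
pose a := s - t i.
have a0 : 0 <= a by rewrite subr_ge0.
have ah : a < h by rewrite /a /h; lra.
pose x := a * Mr / h.
have xh : x * h = a * Mr by rewrite /x mulrAC -mulrA mulfV ?mulr1 // gt_eqF.
have x0 : 0 <= x by apply: divr_ge0; [apply: mulr_ge0 => //; exact: ltW | exact: ltW].
have /andP[rx xr] := truncn_itv x0.
set r := Num.trunc x in rx xr.
have xM : x < Mr by nra.
have rM : (r < k.+1)%N by rewrite -(ltr_nat R); apply: le_lt_trans rx xM.
have rM' : (r.+1 <= k.+1)%N by [].
exists (i * k.+1 + r.+1)%N; split.
  have hi' : (i < n.-1)%N by rewrite ltn_predRL.
  apply: (@leq_trans (i.+1 * k.+1)%N); first by rewrite mulSnr leq_add2l.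
  by rewrite leq_mul2r hi' orbT.
rewrite (sg_formula Gm k.+1 i r.+1 (ltn0Sn k) rM').
rewrite -/Mr -/h.
pose q := r.+1%:R * h / Mr.
have qM : q * Mr = r.+1%:R * h by rewrite /q mulfVK // gt_eqF.
have rS : r.+1%:R = r%:R + 1 :> R by rewrite -addn1 natrD.
have rMr : r.+1%:R <= Mr by rewrite ler_nat.
have aq : a < q by rewrite rS in qM; nra.
have qh : q <= h by nra.
have qa : q - a < eps by rewrite rS in qM; nra.
have su : s < t i + q by rewrite /a in aq; lra.
have ut : t i + q <= t i.+1 by rewrite /h in qh; lra.
have ue : t i + q < s + eps by rewrite /a in qa; lra.
have hpd := path_diff hGm Z w i s (t i + q) hi tis (ltW su) ut.
have hZ : `|Z w (t i + q) - Z w s| < eta.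
  rewrite /proc_diff.
  have -> : X w (t i + q) - Y w (t i + q) - (X w s - Y w s) =
     (X w (t i + q) - X w s) - (Y w (t i + q) - Y w s).
    by rewrite !opprD !opprK addrACA.
  apply: le_lt_trans (ler_normB _ _) _.
  have e1 : `|X w (t i + q) - X w s| < eta / 2.
    apply: hex; rewrite su /=; apply: lt_le_trans ue _; by rewrite lerD2l /eps ge_min lexx.
  have e2 : `|Y w (t i + q) - Y w s| < eta / 2.
    apply: hey; rewrite su /=; apply: lt_le_trans ue _; by rewrite lerD2l /eps ge_min lexx orbT.
  by have := ltrD e1 e2; rewrite -splitr.
have hop : `|sp_path Gm Z w (t i + q) - sp_path Gm Z w s| < eta.
  rewrite hpd; apply: le_lt_trans hZ.
  by have := hGm; case => _ _ _ _ hn; apply: hn.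
have := ler_normD (sp_path Gm Z w s - sp_path Gm Z w (t i + q)) (sp_path Gm Z w (t i + q)).
rewrite subrK distrC => tri.
rewrite /eta in hop; lra.
Qed.

End PartF.

Lemma int_mono {d} {T : measurableType d} {R : realType} (mu : {measure set T -> \bar R})
  (f g : T -> \bar R) : (forall x, (0 <= f x)%E) -> (forall x, (f x <= g x)%E) ->
  (\int[mu]_x f x <= \int[mu]_x g x)%E.
Proof.
move=> f0 fg.
have g0 : forall x, (0 <= g x)%E by move=> x; exact: le_trans (f0 x) (fg x).
rewrite !ge0_integralTE //; apply: le_ereal_sup => _ [h hf <-].
by exists h => // x; exact: le_trans (hf x) (fg x).
Qed.

Section PartG.
Context {R : realType} {H : normedModType R} {d : measure_display} {Omega : measurableType d}.
Context (P : probability Omega R) {F : R -> set (set Omega)} (hF : is_filtration F) {T : R} (T0 : 0 < T).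

Lemma rho_le_d (X Y : Omega -> R -> H) : (rho_em P F T X Y <= d_em P F T X Y)%E.
Proof.
apply: ge_ereal_sup => _ [G hG <-].
apply: le_trans (_ : _ <= \int[P]_w ereal_sup [set (Num.min `|sp_path G (proc_diff X Y) w t| 1)%:E
                 | t in [set t | (0 <= t <= T)%R]])%E _.
  apply: int_mono => w.
    by rewrite lee_fin le_min normr_ge0 ler01.
  apply: ereal_sup_ubound; exists T => //=; by rewrite lexx ltW.
by apply: ereal_sup_ubound; exists G.
Qed.

Context {e : nat -> H} (de : forall x (eps : R), 0 < eps -> exists n, `|x - e n| < eps).
Context (X Y : Omega -> R -> H) (hX : adapted_cadlag F T X) (hY : adapted_cadlag F T Y).
Local Notation Z := (proc_diff X Y).

Lemma gamma_bound (dl c : R) (Gm : @simple_prd R H d Omega) (hGm : is_simple_prd F T Gm) :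
  0 < dl -> dl < 1 -> (rho_em P F T X Y <= c%:E)%E ->
  (\int[P]_w ereal_sup [set (Num.min `|sp_path Gm Z w t| 1)%:E
                 | t in [set t | (0 <= t <= T)%R]] <= (dl + c / dl)%:E)%E.
Proof.
move=> dl0 dl1 hrho.
pose n := sp_n Gm.
pose A k := ~` Cset Gm k.+1 dl Z (n.-1 * k.+1).
have mA k : measurable (A k).
  apply: measurableC; case: hF => _ Fm _; apply: Fm.
  exact: (Cset_meas hF hGm de X Y hX hY k.+1 dl _ (ltn0Sn k) (leqnn _)).
have hitA k w : A k w -> exists j, (j <= n.-1 * k.+1)%N /\ dl < `|sp_path Gm Z w (sg Gm k.+1 j)|.
  move=> hw; case: (pselect (exists j, (j <= n.-1 * k.+1)%N /\ dl < `|sp_path Gm Z w (sg Gm k.+1 j)|)) => // nex.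
  exfalso; apply: hw => l hl; rewrite leNgt; apply/negP => h; apply: nex; exists l; split => //.
have PA k : (P (A k) <= (c / dl)%:E)%E.
  have hs := stopped_simple hF hGm de X Y hX hY k.+1 dl (ltn0Sn k).
  have h1 : (\int[P]_w (Num.min `|sp_path (stopped Gm k.+1 dl Z) Z w T| 1)%:E <= c%:E)%E.
    apply: le_trans hrho; apply: ereal_sup_ubound; by exists (stopped Gm k.+1 dl Z).
  have h2 : (\int[P]_w (dl * \1_(A k) w)%:E <=
             \int[P]_w (Num.min `|sp_path (stopped Gm k.+1 dl Z) Z w T| 1)%:E)%E.
    apply: int_mono => w.
      by rewrite lee_fin mulr_ge0 // ?ltW // indicE ler0n.
    rewrite lee_fin indicE; case: (boolP (w \in A k)) => hw.
      rewrite mulr1 le_min (ltW dl1) andbT; apply: ltW.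
      apply: (stopped_hit hGm k.+1 dl Z w (ltn0Sn k)).
      by apply: hitA; rewrite inE in hw.
    by rewrite mulr0 le_min normr_ge0 ler01.
  have h3 := le_trans h2 h1.
  rewrite (@integralZl_indic _ _ _ P setT measurableT (fun _ => A k) dl) // in h3; last first.
    by move=> dlneg; move: dl0; rewrite ltNge (ltW dlneg).
  rewrite integral_indic // setIT in h3.
  rewrite (_ : (c / dl)%:E = (dl^-1)%:E * c%:E)%E; last by rewrite -EFinM mulrC.
  by rewrite lee_pdivlMl.
pose B m := \bigcap_(k in [set k | (m <= k)%N]) A k.
have mB m : measurable (B m).
  by apply: bigcap_measurable; [exists m => /= | move=> k _; exact: mA].
have ndB : {homo B : m m' / (m <= m')%N >-> (m <= m')%O}.
  move=> m m' mm'; apply/subsetPset => w hw k /= hk; apply: hw => /=; exact: leq_trans mm' hk.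
pose U := \bigcup_m B m.
have mU : measurable U by exact: bigcupT_measurable.
have PB m : (P (B m) <= (c / dl)%:E)%E.
  apply: le_trans (PA m); apply: le_measure; rewrite ?inE //.
  by move=> w hw; apply: hw => /=.
have PU : (P U <= (c / dl)%:E)%E.
  have hc := @nondecreasing_cvg_mu _ _ _ P B mB mU ndB.
  rewrite -(cvg_lim _ hc) //; apply: lime_le; first by apply/cvg_ex; exists (P U).
  by apply: nearW => m; exact: PB.
have pw w : (ereal_sup [set (Num.min `|sp_path Gm Z w t| 1)%:E
                 | t in [set t | (0 <= t <= T)%R]] <= (cst dl%:E) w + (\1_U w)%:E)%E.
  apply: ge_ereal_sup => _ [s hs <-] /=.
  case: (pselect (U w)) => hU.
    rewrite indicE mem_set // -EFinD lee_fin ge_min.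
    by apply/orP; right; rewrite lerDr ltW.
  rewrite indicE memNset // adde0 lee_fin leNgt; apply/negP => h.
  have h' : dl < `|sp_path Gm Z w s| by move: h; rewrite lt_min => /andP[].
  have [m hm] := hit_eventually hGm X Y hX hY w s dl hs h'.
  apply: hU; exists m => // k /= hk hC.
  have [j [hj hdj]] := hm k hk.
  by have := hC j hj; rewrite leNgt hdj.
have f0 : forall w, (0 <= ereal_sup [set (Num.min `|sp_path Gm Z w t| 1)%:E
                 | t in [set t | (0 <= t <= T)%R]])%E.
  by move=> w; apply: ereal_sup_ge; exists (Num.min `|sp_path Gm Z w 0| 1)%:E;
    [exists 0 => //=; rewrite lexx ltW | rewrite lee_fin le_min normr_ge0 ler01].
apply: le_trans (int_mono P _ _ f0 pw) _.
have g1 : forall w : Omega, [set: Omega] w -> (0 <= (cst dl%:E) w)%E by move=> w _; rewrite lee_fin ltW.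
have g2 : forall w : Omega, [set: Omega] w -> (0 <= (\1_U w : R)%:E)%E by move=> w Tw; rewrite lee_fin indicE ler0n.
have m2 := (measurable_EFinP _ _).2 (@measurable_indic _ _ R setT U mU).
rewrite (ge0_integralD P measurableT g1 (measurable_cst _) g2 m2).
rewrite integral_cst //.
have -> : (dl%:E * P setT = dl%:E)%E by rewrite probability_setT mule1.
rewrite integral_indic // setIT EFinD.
by rewrite leeD2l.
Qed.

Lemma d_bound (dl c : R) : 0 < dl -> dl < 1 -> (rho_em P F T X Y <= c%:E)%E ->
  (d_em P F T X Y <= (dl + c / dl)%:E)%E.
Proof.
move=> dl0 dl1 hrho; apply: ge_ereal_sup => _ [G hG <-]; exact: gamma_bound.
Qed.

End PartG.

Theorem lemma2p4 (R : realType) (H : completeNormedModType R)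
  (ip : H -> H -> R) (d : measure_display) (Omega : measurableType d)
  (P : probability Omega R) (F : R -> set (set Omega)) (T : R) :
  is_inner_product ip -> @separable_space R H ->
  is_filtration F -> complete_fps P F -> 0 < T ->
  forall U : set (Omega -> R -> H),
    U `<=` adapted_cadlag F T ->
    (dist_open (adapted_cadlag F T) (rho_em P F T) U <->
     dist_open (adapted_cadlag F T) (d_em P F T) U).
Proof.
move=> _ sep hF _ T0 U _.
have [e de] := dense_seq sep.
split.
  move=> hU x Sx Ux; have [r [r0 hr]] := hU x Sx Ux.
  exists r; split => // y Sy hd; apply: hr => //.
  exact: le_lt_trans (rho_le_d P T0 x y) hd.
move=> hU x Sx Ux; have [r [r0 hr]] := hU x Sx Ux.
pose dl := Num.min (r / 2) (1 / 2).
have dl0 : 0 < dl by rewrite lt_min !divr_gt0.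
have dl1 : dl < 1 by rewrite gt_min; apply/orP; right; lra.
have dlr : dl <= r / 2 by rewrite ge_min lexx.
exists (dl * r / 4); split; first by rewrite !divr_gt0 ?mulr_gt0.
move=> y Sy hrho; apply: hr => //.

apply: le_lt_trans (d_bound P hF T0 de x y Sx Sy dl (dl * r / 4) dl0 dl1 (ltW hrho)) _.
rewrite lte_fin.
have E : dl * r / 4 / dl = r / 4.
  by rewrite mulrAC [dl * r]mulrC mulfK // gt_eqF.
rewrite E; lra.
Qed.
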